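(* Let $L$ be a Lie algebra over a field $K$ of characteristic different from $2$ and $3$. If $L$ has a subalgebra of codimension $1$ which is not an ideal, then $L$ possesses a nonzero commutative $2$-cocycle.
   Context: A commutative $2$-cocycle on $L$ is a symmetric bilinear form $\varphi:L\times L\to K$ such that $\varphi([x,y],z)+\varphi([z,x],y)+\varphi([y,z],x)=0$ for all $x,y,z\in L$. *)

(* Defs.v *)
From mathcomp Require Import all_boot all_algebra.
Set Implicit Arguments. Unset Strict Implicit. Unset Printing Implicit Defensive.
Import GRing.Theory.
Local Open Scope ring_scope.

Definition lie_bracket (K : fieldType) (L : lmodType K) (br : L -> L -> L) : Prop :=
  [/\ (forall (a : K) (x y z : L), br (a *: x + y) z = a *: br x z + br y z),
      (forall (a : K) (x y z : L), br z (a *: x + y) = a *: br z x + br z y),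
      (forall x : L, br x x = 0) &
      (forall x y z : L, br x (br y z) + br y (br z x) + br z (br x y) = 0)].

Definition lie_subalgebra (K : fieldType) (L : lmodType K) (br : L -> L -> L)
  (S : {pred L}) : Prop :=
  [/\ 0 \in S,
      (forall (a : K) (x y : L), x \in S -> y \in S -> a *: x + y \in S) &
      (forall x y : L, x \in S -> y \in S -> br x y \in S)].

Definition codim1 (K : fieldType) (L : lmodType K) (S : {pred L}) : Prop :=
  exists2 v : L, v \notin S &
    forall x : L, exists (a : K) (s : L), s \in S /\ x = s + a *: v.

Definition lie_ideal (K : fieldType) (L : lmodType K) (br : L -> L -> L)
  (S : {pred L}) : Prop :=
  forall x s : L, s \in S -> br x s \in S.

Definition comm_2cocycle (K : fieldType) (L : lmodType K) (br : L -> L -> L)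
  (phi : L -> L -> K) : Prop :=
  [/\ (forall (a : K) (x y z : L), phi (a *: x + y) z = a * phi x z + phi y z),
      (forall (a : K) (x y z : L), phi z (a *: x + y) = a * phi z x + phi z y),
      (forall x y : L, phi x y = phi y x) &
      (forall x y z : L, phi (br x y) z + phi (br z x) y + phi (br y z) x = 0)].

(* Main.v *)
Require Import Defs.
From Stdlib Require Import ClassicalEpsilon.
From mathcomp Require Import all_boot all_algebra.
From mathcomp Require Import ring.
Local Open Scope ring_scope.
Import GRing.Theory.

Theorem lemma2p2 (K : fieldType) (L : lmodType K) (br : L -> L -> L)
  (HL : lie_bracket br)
  (h2 : (2%N \notin [pchar K])) (h3 : (3%N \notin [pchar K]))
  (S : {pred L}) (HS : lie_subalgebra br S) (Hcod : codim1 S)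
  (Hni : ~ lie_ideal br S) :
  exists phi : L -> L -> K,
    comm_2cocycle br phi /\ exists x y : L, phi x y != 0.
Proof.
case: HL => brl brr bxx jac.
case: HS => S0 Slin Sbr.
case: Hcod => v vS dec.
have dec' : forall x, {a : K | exists s, s \in S /\ x = s + a *: v}.
  by move=> x; apply: constructive_indefinite_description; exact: dec.
pose f x := sval (dec' x).
have SZ : forall a x, x \in S -> a *: x \in S.
  by move=> a x xS; have := Slin a x 0 xS S0; rewrite addr0.
have SD : forall x y, x \in S -> y \in S -> x + y \in S.
  by move=> x y xS yS; have := Slin 1 x y xS yS; rewrite scale1r.
have funiq : forall x s a, s \in S -> x = s + a *: v -> f x = a.
  move=> x s a sS ->; rewrite /f; case: (dec' _) => b [t [tS e]] /=.
  have [-> //|nba] := eqVneq b a; exfalso; apply/negP: vS; apply/negPn.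
  have e2 : s - t = (b - a) *: v.
    by rewrite scalerBl -[s](addrK (a *: v)) e addrAC [t + _]addrC addrK.
  have ev : v = (b - a)^-1 *: (s - t).
    by rewrite e2 scalerA mulVf ?scale1r // subr_eq0.
  by rewrite ev; apply/SZ; apply/SD => //; rewrite -scaleN1r; apply/SZ.
have fS : forall s, s \in S -> f s = 0.
  by move=> u uS; apply: (funiq u u 0) => //; rewrite scale0r addr0.
have fv : f v = 1 by apply: (funiq v 0 1) => //; rewrite scale1r add0r.
have hx : forall x, x - f x *: v \in S.
  by move=> x; rewrite /f; case: (dec' x) => a [s [sS e]] /=; rewrite {1}e addrK.
have flin : forall c x y, f (c *: x + y) = c * f x + f y.
  move=> c x y; apply: (funiq _ (c *: (x - f x *: v) + (y - f y *: v))).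
    by apply/SD; [apply/SZ|].
  rewrite -{1}(subrK (f x *: v) x) -{1}(subrK (f y *: v) y).
  by rewrite scalerDr scalerA scalerDl addrACA.
have f0 : f 0 = 0 by apply: fS.
have anti : forall t, f (br v t) + f (br t v) = 0.
  move=> t; have := bxx (v + t).
  have := brl 1 v t (v + t); rewrite !scale1r => ->.
  have := brr 1 v t v; rewrite !scale1r => ->.
  have := brr 1 v t t; rewrite !scale1r => ->.
  rewrite bxx (bxx t) add0r addr0 => e.
  by have := flin 1 (br v t) (br t v); rewrite scale1r mul1r e f0.
pose g x := f (br x v).
have key : forall x y, f (br x y) = f y * g x - f x * g y.
  move=> x y.
  set a := f x; set b := f y; set s := x - a *: v; set t := y - b *: v.
  have ex : x = a *: v + s by rewrite addrC subrK.
  have ey : y = b *: v + t by rewrite addrC subrK.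
  have gx : g x = f (br s v).
    by rewrite /g {1}ex brl bxx scaler0 add0r.
  have gy : g y = f (br t v).
    by rewrite /g {1}ey brl bxx scaler0 add0r.
  rewrite gx gy {1}ex brl ey !brr bxx scaler0 add0r !flin.
  rewrite (fS (br s t)); last by apply: Sbr; [exact: hx | exact: hx].
  have := anti t; rewrite addr0 => /eqP; rewrite addr_eq0 => /eqP ->.
  by rewrite ?f0 ?mulr0 ?add0r; ring.
exists (fun x y => f x * f y); split; last by exists v, v; rewrite fv mulr1 oner_neq0.
split.
- by move=> a x y z; rewrite flin; ring.
- by move=> a x y z; rewrite flin; ring.
- by move=> x y; rewrite mulrC.
- by move=> x y z; rewrite !key; ring.
Qed.
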